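(* Consider the following TDCD process. Let $N\ge 1$ silos each contain $K\ge 1$ clients, let $D=D_1+\dots+D_N$, and write every $\theta\in\mathbb{R}^D$ in blocks $\theta=[\theta_{(1)}^T,\dots,\theta_{(N)}^T]^T$ with $\theta_{(j)}\in\mathbb{R}^{D_j}$. Fix an integer $Q\ge1$ and $\eta>0$. Client $k$ of silo $j$ holds $\theta^t_{k,j}\in\mathbb{R}^{D_j}$. Define $\tilde\theta^t_{(j)}=\frac1K\sum_k\theta^t_{k,j}$. At every multiple $t$ of $Q$, each $\theta^t_{k,j}$ is reset to $\tilde\theta^t_{(j)}$. Define $y^t_{k,j}\in\mathbb{R}^D$ by $(y^t_{k,j})_{(j)}=\theta^t_{k,j}$ and $(y^t_{k,j})_{(l)}=\tilde\theta^{t_0}_{(l)}$ for $l\ne j$, where $t_0$ is as defined below. The update is $\theta^{t+1}_{k,j}=\theta^t_{k,j}-\eta\, g_{k,j}(y^t_{k,j})$, where $g_{k,j}(\cdot)\in\mathbb{R}^{D_j}$ is the stochastic partial gradient computed by client $k$ of silo $j$ on the current minibatch. Let $t_0$ be the most recent iteration prior to iteration $t$ in which the hubs exchanged information and sent new models to the clients, i.e., the most recent synchronization iteration (with $t-t_0\le Q$). Then for every silo $j$, $$\frac1K\sum_{k=1}^K\|\tilde\theta^t_{(j)}-\theta^t_{k,j}\|^2\le\frac{Q\eta^2}{K}\sum_{k=1}^K\sum_{\tau=t_0}^{t-1}\|g_{k,j}(y^\tau_{k,j})\|^2.$$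
   Context: Here $\theta^t_{k,j}$ is the block-$j$ component of $y^t_{k,j}$; the paper denotes it $y^t_{k,j,(j)}$. *)

(* Defs.v *)
From HB Require Import structures.
From mathcomp Require Import all_boot all_order all_algebra.
Set Implicit Arguments. Unset Strict Implicit. Unset Printing Implicit Defensive.
Import Order.TTheory GRing.Theory Num.Theory.
Local Open Scope ring_scope.

(* A vector of R^D, D = D_1 + ... + D_N, represented by its N blocks. *)
Definition blockvec (R : Type) (N : nat) (D : 'I_N -> nat) :=
  forall l : 'I_N, 'rV[R]_(D l).

Definition set_block (R : Type) (N : nat) (D : 'I_N -> nat)
  (f : blockvec R D) (j : 'I_N) (v : 'rV[R]_(D j)) : blockvec R D :=
  fun l => match j =P l with
           | ReflectT e => ecast l 'rV[R]_(D l) e v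
           | ReflectF _ => f l
           end.

Definition sqnorm (R : pzRingType) (n : nat) (v : 'rV[R]_n) : R :=
  \sum_(i < n) v 0 i ^+ 2.

Definition avg (R : fieldType) (K n : nat) (th : 'I_K -> 'rV[R]_n) : 'rV[R]_n :=
  K%:R^-1 *: \sum_(k < K) th k.

Definition lastsync (Q t : nat) : nat := (t %/ Q * Q)%N.

Section TDCD.
Variables (R : fieldType) (N K : nat) (D : 'I_N -> nat) (Q : nat).
(* theta t k j : model of client k of silo j at iteration t (after any reset) *)
Variable theta : nat -> 'I_K -> forall j : 'I_N, 'rV[R]_(D j).

Definition tilde (t : nat) (j : 'I_N) : 'rV[R]_(D j) :=
  avg (fun k => theta t k j).

Definition yvec (t : nat) (k : 'I_K) (j : 'I_N) : blockvec R D :=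
  @set_block R N D (fun l => tilde (lastsync Q t) l) j (theta t k j).
End TDCD.

(* The TDCD process: g t k j is the stochastic partial gradient map of client
   k of silo j on its minibatch at iteration t. At each multiple of Q the
   models are reset to the silo average. *)
Definition TDCD_process (R : fieldType) (N K : nat) (D : 'I_N -> nat) (Q : nat)
  (eta : R)
  (g : nat -> 'I_K -> forall j : 'I_N, blockvec R D -> 'rV[R]_(D j))
  (theta : nat -> 'I_K -> forall j : 'I_N, 'rV[R]_(D j)) : Prop :=
  (forall k j, theta 0%N k j = tilde theta 0%N j) /\
  (forall t k j,
     let pre := fun k' : 'I_K =>
       theta t k' j - eta *: g t k' j (yvec Q theta t k' j) in
     theta t.+1 k j = if (Q %| t.+1)%N then avg pre else pre k).

(* Main.v *)
Require Import Defs.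
From HB Require Import structures.
From mathcomp Require Import all_boot all_order all_algebra.
From mathcomp Require Import ring lra zify.
Import Order.TTheory GRing.Theory Num.Theory.
Local Open Scope ring_scope.

Lemma cs_sum (R : realFieldType) (m n : nat) (b : nat -> R) :
  (\sum_(m <= i < n) b i) ^+ 2 <= (n - m)%:R * \sum_(m <= i < n) b i ^+ 2.
Proof.
rewrite -(@ler_pM2l _ 2) //.
have E : 2 * ((n - m)%:R * \sum_(m <= i < n) b i ^+ 2) =
  \sum_(m <= i < n) \sum_(m <= l < n) (b i ^+ 2 + b l ^+ 2).
  under [RHS]eq_bigr => i _ do rewrite big_split /= sumr_const_nat.
  rewrite big_split /= sumr_const_nat -mulr_natl -sumrMnl.
  by rewrite !mulr_natl mulr2n -?sumrMnl.
rewrite E expr2 mulr_suml mulr_sumr; apply: ler_sum => i _.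
rewrite mulr_sumr mulr_sumr; apply: ler_sum => l _.
have := sqr_ge0 (b i - b l); lra.
Qed.

Lemma var_le (R : realFieldType) (K : nat) (x : 'I_K -> R) (c : R) : (0 < K)%N ->
  \sum_(k < K) (K%:R^-1 * \sum_(l < K) x l - x k) ^+ 2 <= \sum_(k < K) (x k - c) ^+ 2.
Proof.
move=> hK; set a := K%:R^-1 * _.
have KS : \sum_(l < K) x l = K%:R * a.
  rewrite /a mulrA mulfV ?mul1r // pnatr_eq0 -lt0n //.
rewrite -subr_ge0 -sumrB.
clearbody a.
rewrite (eq_bigr (fun k => (a - c) * (2 * x k - a - c))); last by move=> k _; ring.
rewrite -mulr_sumr !sumrB -mulr_sumr KS !sumr_const card_ord.
have -> : a *+ K = K%:R * a by rewrite mulr_natl.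
have -> : c *+ K = K%:R * c by rewrite mulr_natl.
rewrite (_ : _ * _ = K%:R * (a - c) ^+ 2); last by ring.
by rewrite mulr_ge0 ?sqr_ge0.
Qed.

Lemma avg_const (R : realFieldType) (K n : nat) (v : 'rV[R]_n) : (0 < K)%N ->
  avg (fun _ : 'I_K => v) = v.
Proof.
move=> hK; rewrite /avg sumr_const card_ord -scaler_nat scalerA mulVf ?scale1r //.
by rewrite pnatr_eq0 -lt0n.
Qed.

Lemma avg_ext (R : fieldType) (K n : nat) (f h : 'I_K -> 'rV[R]_n) :
  (forall k, f k = h k) -> avg f = avg h.
Proof. by move=> e; rewrite /avg (eq_bigr _ (fun k _ => e k)). Qed.

Theorem lemma5 (R : realFieldType) (N K : nat) (D : 'I_N -> nat) (Q : nat)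
  (eta : R)
  (g : nat -> 'I_K -> forall j : 'I_N, blockvec R D -> 'rV[R]_(D j))
  (theta : nat -> 'I_K -> forall j : 'I_N, 'rV[R]_(D j))
  (hN : (1 <= N)%N) (hK : (1 <= K)%N) (hQ : (1 <= Q)%N) (heta : 0 < eta)
  (hproc : TDCD_process Q eta g theta)
  (t t0 : nat)
  (ht0 : (Q %| t0)%N) (ht0t : (t0 <= t)%N) (htQ : (t <= t0 + Q)%N)
  (hlast : forall s, (t0 < s < t)%N -> ~~ (Q %| s)%N)
  (j : 'I_N) :
  K%:R^-1 * \sum_(k < K) sqnorm (tilde theta t j - theta t k j)
  <= Q%:R * eta ^+ 2 / K%:R *
     \sum_(k < K) \sum_(t0 <= tau < t) sqnorm (g tau k j (yvec Q theta tau k j)).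
Proof.
case: hproc => h0 hstep.
set G := fun tau k => g tau k j (yvec Q theta tau k j).
have hsync : forall s, (Q %| s)%N -> forall k, theta s k j = tilde theta s j.
  case=> [|s] hs k; first exact: h0.
  have := hstep s k j; rewrite /= hs => ->.
  rewrite /tilde [RHS](@avg_ext R K (D j) _ (fun _ => avg (fun k' => theta s k' j - eta *: g s k' j (yvec Q theta s k' j)))); last by move=> k' /=; rewrite hstep /= hs.
  by rewrite avg_const.
set c := tilde theta t0 j.
have claim : forall d, (t0 + d <= t)%N -> (d = 0%N \/ ~~ (Q %| t0 + d)%N) ->
   forall k i, theta (t0 + d)%N k j 0 i = c 0 i - eta * \sum_(t0 <= tau < t0 + d) (G tau k) 0 i.
  elim=> [|d IH] hd hq k i.
    by rewrite addn0 big_geq // hsync // mulr0 subr0.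
  have hq' : ~~ (Q %| (t0 + d).+1)%N.
    by case: hq => //; rewrite addnS.
  rewrite addnS (hstep (t0 + d)%N k j) /= (negbTE hq'). rewrite mxE. rewrite mxE mxE.
  rewrite (big_nat_recr (t0 + d)%N t0); last by rewrite leq_addr.
  rewrite IH; first by rewrite mulrDr opprD addrA.
    by apply: ltnW; rewrite -addnS.
  case: d {IH hd hq hq'} (hd) => [|d] hd; [by left | right].
  by apply: hlast; apply/andP; split; lia.
have sq0 : forall n (v : 'rV[R]_n), 0 <= sqnorm v.
  by move=> n v; apply: sumr_ge0 => i _; apply: sqr_ge0.
have RHS0 : 0 <= Q%:R * eta ^+ 2 / K%:R *
     \sum_(k < K) \sum_(t0 <= tau < t) sqnorm (G tau k).
  apply: mulr_ge0; last by apply: sumr_ge0 => k _; apply: sumr_ge0 => tau _.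
  by rewrite mulr_ge0 ?invr_ge0 ?ler0n // mulr_ge0 ?ler0n ?sqr_ge0.
case hQt: (Q %| t)%N.
  rewrite big1 ?mulr0 //; move=> k _; rewrite hsync // subrr /sqnorm.
  by rewrite big1 // => i _; rewrite mxE expr0n.
have ht : forall k i, theta t k j 0 i = c 0 i - eta * \sum_(t0 <= tau < t) (G tau k) 0 i.
  move=> k i; have := claim (t - t0)%N; rewrite subnKC //; apply => //.
  by right; rewrite hQt.
rewrite (mulrC (Q%:R * _)) -mulrA ler_wpM2l ?invr_ge0 ?ler0n //.
rewrite /sqnorm exchange_big /=.
have EX : \sum_(k < K) \sum_(t0 <= tau < t) \sum_(i < D j) (G tau k 0 i) ^+ 2 =
    \sum_(i < D j) \sum_(k < K) \sum_(t0 <= tau < t) (G tau k 0 i) ^+ 2.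
  rewrite [RHS]exchange_big /=; apply: eq_bigr => k _.
  by rewrite exchange_big.
rewrite EX mulr_sumr.
apply: ler_sum => i _.
rewrite (eq_bigr (fun k => (K%:R^-1 * \sum_(l < K) theta t l j 0 i - theta t k j 0 i) ^+ 2)); last first.
  by move=> k _; rewrite /tilde /avg !mxE summxE.
apply: le_trans (@var_le _ _ (fun l => theta t l j 0 i) (c 0 i) hK) _.
rewrite (eq_bigr (fun k => eta ^+ 2 * (\sum_(t0 <= tau < t) G tau k 0 i) ^+ 2)); last first.
  by move=> k _; rewrite ht; ring.
rewrite -mulr_sumr (mulrC Q%:R) -[X in _ <= X]mulrA ler_wpM2l ?sqr_ge0 // mulr_sumr.
apply: ler_sum => k _; apply: le_trans (cs_sum _ _ _ _) _.
apply: ler_wpM2r; first by apply: sumr_ge0 => tau _; apply: sqr_ge0.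
rewrite ler_nat; lia.
Qed.
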